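(* Let $T$ be an iso-unique zero forcing tree, let $\mathcal{P}$ be a minimum path cover of $T$, and let $P: x_1,\ldots,x_\ell$ be a path in $\mathcal{P}$. Let $p=\frac{\ell+1}{2}$ if $\ell$ is odd and $p=\frac{\ell}{2}$ if $\ell$ is even. (a) If $\ell$ is odd, then the connected components of $T-x_p$ that contain $x_{p-1}$ and $x_{p+1}$, respectively, are isomorphic. (b) If $\ell$ is even, then the connected components of $T-x_px_{p+1}$ that contain $x_p$ and $x_{p+1}$, respectively, are isomorphic. Moreover, there is an automorphism of $T$ that maps $x_1$ to $x_\ell$ and $x_\ell$ to $x_1$.
   Context: Zero forcing: in a graph $G$, starting with an initial set $S\subseteq V(G)$ of active vertices, repeatedly apply the rule: if an active vertex $u$ has exactly one non-active neighbor $v$, then $v$ becomes active. $S$ is a zero forcing set if eventually all vertices become active; a minimum zero forcing set is one of minimum size. A graph is an iso-unique zero forcing graph if for every two minimum zero forcing sets $A,B$ there is an automorphism $\phi$ with $\phi(A)=B$. A path cover of a tree $T$ is a set of vertex-disjoint paths of $T$ (a single vertex counts as a path) covering all vertices of $T$; it is minimum if no path cover has fewer paths. $P:x_1,\ldots,x_\ell$ denotes the path with vertices $x_1,\dots,x_\ell$ and edges $x_ix_{i+1}$. *)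

(* Defs.v *)
From mathcomp Require Import all_boot all_fingroup.
Set Implicit Arguments. Unset Strict Implicit. Unset Printing Implicit Defensive.

Section Graphs.
Variable T : finType.
Variable e : rel T.

Definition simple_graph := symmetric e /\ irreflexive e.

Definition connected_graph := forall x y : T, connect e x y.

Definition acyclic_graph :=
  forall (x : T) (s : seq T), 2 <= size s -> uniq (x :: s) -> path e x s ->
    ~~ e (last x s) x.

Definition is_tree := [/\ simple_graph, connected_graph & acyclic_graph].

Definition zf_step (S : {set T}) : {set T} :=
  S :|: [set v | [exists u in S, [&& e u v, v \notin S &
            [forall w, (e u w && (w \notin S)) ==> (w == v)]]]].

Definition zero_forcing (S : {set T}) := exists n, iter n zf_step S = setT.

Definition min_zero_forcing (S : {set T}) :=
  zero_forcing S /\ forall S' : {set T}, zero_forcing S' -> #|S| <= #|S'|.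

Definition automorphism (phi : {perm T}) := forall x y, e (phi x) (phi y) = e x y.

Definition iso_unique_zf :=
  forall A B : {set T}, min_zero_forcing A -> min_zero_forcing B ->
    exists2 phi : {perm T}, automorphism phi & phi @: A = B.


Definition graph_path (s : seq T) :=
  if s is h :: t then uniq s && path e h t else false.

Definition path_cover (P : seq (seq T)) :=
  (forall s, s \in P -> graph_path s) /\
  uniq (flatten P) /\ (forall v : T, v \in flatten P).

Definition min_path_cover (P : seq (seq T)) :=
  path_cover P /\ forall Q, path_cover Q -> size P <= size Q.

Definition component (r : rel T) (y : T) : {set T} := [set z | connect r y z].

Definition del_vertex (x : T) : rel T := fun a b => [&& e a b, a != x & b != x].

Definition del_edge (x y : T) : rel T :=
  fun a b => e a b && ~~ (((a == x) && (b == y)) || ((a == y) && (b == x))).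

Definition iso_induced (A B : {set T}) :=
  exists f : T -> T, [/\ {in A &, injective f}, f @: A = B &
     {in A &, forall a b, e (f a) (f b) = e a b}].

End Graphs.

(* Main.v *)
Require Import Defs.
From mathcomp Require Import all_boot all_fingroup.
From mathcomp Require Import zify.
Set Implicit Arguments. Unset Strict Implicit. Unset Printing Implicit Defensive.

Section Tree.
Variable T : finType.
Variable e : rel T.
Hypothesis esym : symmetric e.
Hypothesis eirr : irreflexive e.
Hypothesis eacyc : acyclic_graph e.

Lemma connect_hom (r1 r2 : rel T) (f : T -> T) :
  (forall a b, r1 a b -> r2 (f a) (f b)) ->
  forall a b, connect r1 a b -> connect r2 (f a) (f b).
Proof.
move=> H a b /connectP [p pp ->]; apply/connectP; exists (map f p).
  by apply: homo_path pp.
by rewrite last_map.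
Qed.

Lemma noback (U : pred T) (f : T -> T) x :
  x \in U -> (forall v, v \in U -> f v \in U) -> (forall v, v \in U -> e v (f v)) ->
  (forall v, v \in U -> f (f v) != v) -> False.
Proof.
move=> xU fU ef ff.
have iterU : forall n v, v \in U -> iter n f v \in U.
  by elim=> // n IH v vU; rewrite iterS fU // IH.
have /trajectP [i lti Hi] := looping_order f x.
set y := iter i f x.
have yU : y \in U by apply: iterU.
have cyc : fcycle f (fingraph.orbit f y).
  apply/(orbitPcycle 0 3); exists (fingraph.order f x - i).-1.
  rewrite prednK ?subn_gt0 // /y -iterD subnK ?Hi //; exact: ltnW.
have pU : forall a s, a \in U -> path (frel f) a s -> path e a s /\ last a s \in U.
  move=> a s; elim: s a => [|b s IH] a aU //= /andP [/eqP fab ps].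
  have bU : b \in U by rewrite -fab fU.
  have [p1 p2] := IH b bU ps; split => //; rewrite p1 andbT -fab; exact: ef.
have uq := fingraph.orbit_uniq f y.
move: cyc uq; rewrite /fingraph.orbit -orderSpred /=; set s := traject f (f y) _ => cyc uq.
rewrite rcons_path in cyc; case/andP: cyc => cyc /eqP lst.
have [pe lU] := pU _ _ yU cyc.
have H := eacyc (x:=y) (s:=s).
case: s uq pe H cyc lst lU => [|a [|b s]] //= uq pe H cyc lst lU.
- by move: (ef _ yU); rewrite lst eirr.
- by case/andP: cyc => /eqP fya _; move: (ff _ yU); rewrite fya lst eqxx.
move: H; rewrite uq pe; move: (ef _ lU); rewrite lst => ->.
by move/(_ isT isT isT).
Qed.

Lemma path_delv w a q : path (del_vertex e w) a q -> all (fun z => z != w) q.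
Proof.
elim: q a => //= b q IH a /andP [/and3P [_ _ bw] /IH ->]; by rewrite bw.
Qed.

Lemma path_delv_sub w a q : path (del_vertex e w) a q -> path e a q.
Proof. by apply: sub_path => u v /and3P []. Qed.

Lemma path_to_delv w a q : a != w -> all (fun z => z != w) q -> path e a q ->
  path (del_vertex e w) a q.
Proof.
elim: q a => //= b q IH a aw /andP [bw aq] /andP [eab pq].
by rewrite /del_vertex eab aw bw /= IH.
Qed.

Lemma delv_sym w : symmetric (del_vertex e w).
Proof. by move=> a b; rewrite /del_vertex esym [(a != w) && _]andbC. Qed.

Lemma dele_sym c d : symmetric (del_edge e c d).
Proof.
by move=> a b; rewrite /del_edge esym (andbC (b == c)) (andbC (b == d)) orbC.
Qed.

Lemma sep_vertex w u v : e w u -> e w v -> u != v -> ~~ connect (del_vertex e w) u v.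
Proof.
move=> ewu ewv nuv; apply/negP => /connectP [p pp lp].
move: lp; case: (shortenP pp) => q qp quq _ lq.
have uw : u != w by apply: contraTneq ewu => ->; rewrite eirr.
have qw := path_delv qp.
have H := eacyc (x:=w) (s:=u :: q).
case: q qp quq lq qw H => [|a q] qp quq lq qw H; first by rewrite lq eqxx in nuv.
have U : uniq [:: w, u, a & q].
  rewrite cons_uniq quq andbT inE negb_or eq_sym uw /=.
  by apply/negP => wq; move/allP: qw => /(_ w wq); rewrite eqxx.
have Pp : path e w [:: u, a & q] by apply/andP; split => //; exact: path_delv_sub qp.
move: (H isT U Pp) => /negP; apply; rewrite /= in lq *; by rewrite -lq esym.
Qed.

Lemma sep_edge c d : e c d -> ~~ connect (del_edge e c d) c d.
Proof.
move=> ecd; apply/negP => /connectP [p pp lp].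
move: lp; case: (shortenP pp) => q qp quq _ lq.
have qe : path e c q by apply: sub_path qp => a b /andP [].
have H := eacyc (x:=c) (s:=q).
case: q qp quq lq qe H => [|a [|b q]] qp quq lq qe H.
- by move: ecd; rewrite lq eirr.
- by move: qp; rewrite /= in lq; rewrite /= -lq /del_edge ecd !eqxx.
move: (H isT quq qe) => /negP; apply; rewrite /= in lq *; by rewrite -lq esym.
Qed.

Lemma path_unique a p q : uniq (a :: p) -> path e a p -> uniq (a :: q) -> path e a q ->
  last a p = last a q -> p = q.
Proof.
elim: p a q => [|u p IH] a [|v q] //.
- rewrite cons_uniq => _ _ /andP [aq _] _ /= la.
  by move: aq; rewrite la mem_last.
- rewrite cons_uniq => /andP [ap _] _ _ _ /= la.
  by move: ap; rewrite -la mem_last.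
rewrite [uniq (a :: u :: p)]cons_uniq [uniq (a :: v :: q)]cons_uniq => /andP [ap up] /andP [eau pp] /andP [aq vq] /andP [eav pq] /= luv.
have {}pp : path e u p := pp; have {}pq : path e v q := pq.
have [euv|nuv] := eqVneq u v; first by subst v; rewrite (IH u q).
exfalso; move: (sep_vertex eau eav nuv) => /negP; apply.
have au : all (fun z => z != a) p.
  by apply/allP => z zp; apply: contraNneq ap => <-; rewrite inE zp orbT.
have aq' : all (fun z => z != a) q.
  by apply/allP => z zq; apply: contraNneq aq => <-; rewrite inE zq orbT.
have ua : u != a by apply: contraNneq ap => ->; rewrite inE eqxx.
have va : v != a by apply: contraNneq aq => ->; rewrite inE eqxx.
have c1 : connect (del_vertex e a) u (last u p).
  by apply/connectP; exists p => //; apply: path_to_delv.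
have c2 : connect (del_vertex e a) v (last v q).
  by apply/connectP; exists q => //; apply: path_to_delv.
apply: connect_trans c1 _; rewrite luv (sym_connect_sym (delv_sym a)); exact: c2.
Qed.

Hypothesis econn : connected_graph e.

Lemma autoV (phi : {perm T}) : automorphism e phi -> automorphism e (phi^-1)%g.
Proof. by move=> H x y; rewrite -H !permKV. Qed.

Lemma delv_dele w u v a b : w = u \/ w = v -> del_vertex e w a b -> del_edge e u v a b.
Proof.
move=> wuv /and3P [eab aw bw]; rewrite /del_edge eab /=.
by case: wuv => <-; rewrite (negbTE aw) (negbTE bw) ?andbF.
Qed.

Lemma fixed_or_flip (phi : {perm T}) (x0 : T) : automorphism e phi ->
  (exists w, phi w = w) \/ (exists c d, [/\ e c d, phi c = d & phi d = c]).
Proof.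
move=> Ha.
case: (boolP [exists w, phi w == w]) => [/existsP [w /eqP]|nofix]; first by left; exists w.
case: (boolP [exists c, exists d, [&& e c d, phi c == d & phi d == c]]) =>
  [/existsP [c /existsP [d /and3P [H1 /eqP H2 /eqP H3]]]|noflip].
  by right; exists c, d.
exfalso.
have nf : forall w, phi w != w.
  by move=> w; apply: contraNneq nofix => H; apply/existsP; exists w; rewrite H.
have nfl : forall c d, e c d -> phi c = d -> phi d = c -> False.
  move=> c d H1 H2 H3; move/negP: noflip; apply; apply/existsP; exists c.
  by apply/existsP; exists d; rewrite H1 H2 H3 !eqxx.
pose good v u := e v u && connect (del_vertex e v) u (phi v).
have ex : forall v, exists u, good v u.
  move=> v; have /connectP [p pp lp] := econn v (phi v).
  move: lp; case: (shortenP pp) => q qp quq _ lq.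
  case: q qp quq lq => [|u q] qp quq lq; first by move: (nf v); rewrite lq eqxx.
  exists u; case/andP: qp => evu pq; rewrite /good evu /=.
  move: quq; rewrite cons_uniq inE negb_or => /andP [/andP [vu vq] _].
  apply/connectP; exists q => //; apply: path_to_delv => //.
    by rewrite eq_sym.
  by apply/allP => z zq; apply: contraNneq vq => <-.
pose f v := odflt v [pick u | good v u].
have fg : forall v, good v (f v).
  move=> v; rewrite /f; case: pickP => [u //|H]; have [u gu] := ex v.
  by rewrite H in gu.
apply: (noback (U := predT) (f := f) (x := x0)) => // v _.
  by case/andP: (fg v).
apply/eqP => ffv; set u := f v in ffv.
have /andP [evu c1] := fg v; have /andP [euv c2] := fg u; rewrite ffv in euv c2.
have d1 : connect (del_edge e u v) u (phi v).
  by apply: connect_sub c1 => a b H; apply: connect1; apply: delv_dele H; right.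
have d2 : connect (del_edge e u v) v (phi u).
  by apply: connect_sub c2 => a b H; apply: connect1; apply: delv_dele H; left.
have epe : e (phi v) (phi u) by rewrite Ha.
case: (boolP (del_edge e u v (phi v) (phi u))) => D.
  move: (sep_edge euv) => /negP; apply; apply: connect_trans d1 _.
  apply: connect_trans (connect1 D) _.
  by rewrite (sym_connect_sym (dele_sym u v)).
move: D; rewrite /del_edge epe /= negbK => /orP [/andP [/eqP h1 /eqP h2]|/andP [/eqP h1 _]].
  exact: (nfl v u evu h1 h2).
by move: (nf v); rewrite h1 eqxx.
Qed.

Lemma swap_auto (psi : {perm T}) (X Y : {set T}) : automorphism e psi ->
  [disjoint X & Y] -> psi @: X = Y ->
  (forall u v, (u \in X) || (u \in Y) -> ~~ ((v \in X) || (v \in Y)) -> e u v -> psi v = v) ->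
  (forall u v, u \in X -> v \in Y -> e u v = e (psi u) ((psi^-1)%g v)) ->
  exists2 sg : {perm T}, automorphism e sg &
    (forall a, a \in X -> sg a = psi a) /\ (forall b, b \in Y -> sg b = (psi^-1)%g b).
Proof.
move=> Ha dXY iXY H2 H3.
have HaV := autoV Ha.
have XY : forall a, a \in X -> psi a \in Y by move=> a aX; rewrite -iXY imset_f.
have YX : forall b, b \in Y -> (psi^-1)%g b \in X.
  by move=> b; rewrite -iXY => /imsetP [a aX ->]; rewrite permK.
have nYX : forall a, a \in Y -> (a \in X) = false.
  by move=> a aY; apply: (disjointFl dXY aY).
pose g v := if v \in X then psi v else if v \in Y then (psi^-1)%g v else v.
have gK : cancel g g.
  move=> v; rewrite /g; case: (boolP (v \in X)) => vX.
    by rewrite (nYX _ (XY _ vX)) (XY _ vX) permK.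
  case: (boolP (v \in Y)) => vY; first by rewrite YX // permKV.
  by rewrite (negbTE vX) (negbTE vY).
exists (perm (can_inj gK)); last by split => a aX; rewrite permE /g ?aX // (nYX _ aX).
have key : forall u v, (u \in X) || (u \in Y) -> e (g u) (g v) = e u v.
  move=> u v; rewrite /g; case: (boolP (u \in X)) => uX /= uY.
    case: (boolP (v \in X)) => vX; first by rewrite Ha.
    case: (boolP (v \in Y)) => vY; first by rewrite (H3 u v uX vY).
    have vN : ~~ ((v \in X) || (v \in Y)) by rewrite negb_or vX vY.
    apply/idP/idP => E.
      have pv := H2 _ _ (introT orP (or_intror (XY _ uX))) vN E.
      by rewrite -Ha pv.
    by rewrite -(H2 _ _ (introT orP (or_introl uX)) vN E) Ha.
  rewrite uY.
  case: (boolP (v \in X)) => vX; first by rewrite esym -H3 // esym.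
  case: (boolP (v \in Y)) => vY; first by rewrite HaV.
  have vN : ~~ ((v \in X) || (v \in Y)) by rewrite negb_or vX vY.
  apply/idP/idP => E.
    have pv := H2 _ _ (introT orP (or_introl (YX _ uY))) vN E.
    by rewrite -(permKV psi u) -pv Ha.
  have pv := H2 _ _ (introT orP (or_intror uY)) vN E.
  have pv' : (psi^-1)%g v = v by rewrite -{1}pv permK.
  by rewrite -pv' HaV.
move=> u v; rewrite !permE.
case: (boolP ((u \in X) || (u \in Y))) => uN; first exact: key.
case: (boolP ((v \in X) || (v \in Y))) => vN; first by rewrite esym key // esym.
by move: uN vN; rewrite /g !negb_or => /andP [/negbTE -> /negbTE ->] /andP [/negbTE -> /negbTE ->].
Qed.

Lemma comp_image (sg : {perm T}) (r : rel T) y :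
  (forall a b, r (sg a) (sg b) = r a b) ->
  sg @: [set z | connect r y z] = [set z | connect r (sg y) z].
Proof.
move=> Hr; apply/setP => z; rewrite inE; apply/imsetP/idP.
  move=> [z' ]; rewrite inE => cz ->; apply: connect_hom cz => a b; by rewrite Hr.
move=> cz; exists ((sg^-1)%g z); last by rewrite permKV.
rewrite inE -{1}(permK sg y); apply: connect_hom cz => a b.
by rewrite -{1}(permKV sg a) -{1}(permKV sg b) Hr.
Qed.

Lemma delv_ne w y z : connect (del_vertex e w) y z -> y != w -> z != w.
Proof.
move=> /connectP [p pp ->] yw; have := mem_last y p; rewrite inE => /orP [/eqP ->//|].
by move/(allP (path_delv pp)).
Qed.

Lemma first_fixed (psi : {perm T}) q a : path e a q -> psi a != a ->
  psi (last a q) = last a q ->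
  exists u w, [/\ e u w, psi w = w, psi u != u & connect (del_vertex e w) a u].
Proof.
elim: q a => [|b q IH] a /=; first by move=> _ /eqP pa /pa.
move=> /andP [eab pq] pa pl.
case: (eqVneq (psi b) b) => pb.
  by exists a, b; split => //; apply: connect0.
have [u [w [euw pw pu cbu]]] := IH b pq pb pl.
exists u, w; split => //; apply: connect_trans cbu; apply: connect1.
rewrite /del_vertex eab /=; apply/andP; split.
  by apply: contraNneq pa => ->; rewrite pw.
by apply: contraNneq pb => ->; rewrite pw.
Qed.

Lemma dele_swap c d a b : del_edge e d c a b = del_edge e c d a b.
Proof. by rewrite /del_edge orbC. Qed.

Lemma dele_cover_aux c d p y :
  connect (del_edge e c d) c y || connect (del_edge e c d) d y -> path e y p ->
  connect (del_edge e c d) c (last y p) || connect (del_edge e c d) d (last y p).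
Proof.
elim: p y => //= b p IH y H /andP [eyb pb]; apply: IH => //.
case: (boolP (del_edge e c d y b)) => D.
  by case/orP: H => H; apply/orP; [left|right]; apply: connect_trans H (connect1 D).
move: D; rewrite /del_edge eyb /= negbK => /orP [/andP [_ /eqP ->]|/andP [_ /eqP ->]];
  by rewrite connect0 ?orbT.
Qed.

Lemma dele_cover c d v : connect (del_edge e c d) c v || connect (del_edge e c d) d v.
Proof.
have /connectP [p pp ->] := econn c v.
by apply: dele_cover_aux pp; rewrite connect0.
Qed.

Lemma swap_exists (psi : {perm T}) a b : automorphism e psi -> psi a = b ->
  exists2 sg : {perm T}, automorphism e sg & sg a = b /\ sg b = a.
Proof.
move=> Ha pab.
case: (eqVneq a b) => [<-|nab]; first by exists 1%g => [x y|]; rewrite ?perm1.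
have pa : psi a != a by rewrite pab eq_sym.
case: (fixed_or_flip a Ha) => [[w0 pw0]|[c [d [ecd pc pd]]]].
  have /connectP [p pp lp] := econn a w0.
  have pl : psi (last a p) = last a p by rewrite -lp.
  have [u [w [euw pw pu cau]]] := first_fixed pp pa pl.
  pose X := [set z | connect (del_vertex e w) u z].
  have Hr : forall x y, del_vertex e w (psi x) (psi y) = del_vertex e w x y.
    by move=> x y; rewrite /del_vertex Ha -{1 2}pw !(inj_eq perm_inj).
  have iXY := comp_image u Hr.
  have uw : u != w by apply: contraTneq euw => ->; rewrite eirr.
  have puw : psi u != w by rewrite -pw (inj_eq perm_inj).
  have aX : a \in X by rewrite inE (sym_connect_sym (delv_sym w)).
  have XY0 : forall z, z \in X -> z \in psi @: X -> False.
    move=> z; rewrite iXY !inE => c1 c2.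
    have ewu : e w u by rewrite esym.
    have ewpu : e w (psi u) by rewrite -{1}pw Ha.
    have upu : u != psi u by rewrite eq_sym.
    move: (sep_vertex ewu ewpu upu) => /negP; apply.
    by apply: connect_trans c1 _; rewrite (sym_connect_sym (delv_sym w)).
  have noE : forall x y, x \in X -> y \in psi @: X -> e x y = false.
    move=> x y xX yY; apply/negP => exy; apply: (XY0 y) => //.
    move: xX; rewrite !inE => cx; have xw := delv_ne cx uw.
    apply: connect_trans cx (connect1 _); rewrite /del_vertex exy xw /=.
    by move: yY; rewrite iXY inE => /delv_ne; apply.
  have dj : [disjoint X & psi @: X].
    by apply/pred0P => z /=; apply/negP => /andP [zX zY]; apply: (XY0 z).
  have h2 : forall x v, (x \in X) || (x \in psi @: X) -> ~~ ((v \in X) || (v \in psi @: X)) ->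
      e x v -> psi v = v.
    move=> x v xXY vN exv; apply/eqP; apply: contraNT vN => vw.
    have vw' : v != w by apply: contraNneq vw => ->; rewrite pw.
    case/orP: xXY => [xX|xY].
      apply/orP; left; move: xX; rewrite !inE => cx; have xw := delv_ne cx uw.
      by apply: connect_trans cx (connect1 _); rewrite /del_vertex exv xw vw'.
    apply/orP; right; move: xY; rewrite iXY !inE => cx; have xw := delv_ne cx puw.
    by apply: connect_trans cx (connect1 _); rewrite /del_vertex exv xw vw'.
  have h3 : forall x v, x \in X -> v \in psi @: X -> e x v = e (psi x) ((psi^-1)%g v).
    move=> x v xX vY; rewrite noE // esym noE //.
      by move: vY => /imsetP [z zX ->]; rewrite permK.
    exact: imset_f.
  have [sg Hsg [s1 s2]] := swap_auto Ha dj (erefl _) h2 h3.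
  have bY : b \in psi @: X by rewrite -pab imset_f.
  by exists sg => //; rewrite s1 // s2 // -pab permK.
wlog cca : c d ecd pc pd / connect (del_edge e c d) c a.
  move=> W; case/orP: (dele_cover c d a) => H; first exact: (W c d).
  apply: (W d c) => //; first by rewrite esym.
  by rewrite (eq_connect (dele_swap c d)).
pose X := [set z | connect (del_edge e c d) c z].
have Hr : forall x y, del_edge e c d (psi x) (psi y) = del_edge e c d x y.
  have E1 : forall z, (psi z == c) = (z == d) by move=> z; rewrite -{1}pd (inj_eq perm_inj).
  have E2 : forall z, (psi z == d) = (z == c) by move=> z; rewrite -{1}pc (inj_eq perm_inj).
  by move=> x y; rewrite /del_edge Ha !E1 !E2 orbC.
have iXY := comp_image c Hr; rewrite pc in iXY.
have ndc : ~~ connect (del_edge e c d) c d := sep_edge ecd.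
have cross : forall x y, x \in X -> y \in psi @: X -> e x y = (x == c) && (y == d).
  move=> x y; rewrite iXY !inE => cx cy; apply/idP/idP; last first.
    by case/andP => /eqP -> /eqP ->.
  move=> exy; case: (boolP (del_edge e c d x y)) => D.
    move/negP: ndc; case; apply: connect_trans cx _; apply: connect_trans (connect1 D) _.
    by rewrite (sym_connect_sym (dele_sym c d)).
  move: D; rewrite /del_edge exy /= negbK => /orP [//|/andP [/eqP xd _]].
  by move: cx; rewrite xd (negbTE ndc).
have dj : [disjoint X & psi @: X].
  apply/pred0P => z /=; apply/negP => /andP [zX zY].
  move/negP: ndc; apply; move: zX zY; rewrite iXY !inE => c1 c2.
  by apply: connect_trans c1 _; rewrite (sym_connect_sym (dele_sym c d)).
have h2 : forall x v, (x \in X) || (x \in psi @: X) -> ~~ ((v \in X) || (v \in psi @: X)) ->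
    e x v -> psi v = v.
  move=> x v _ vN; move: vN; rewrite iXY !inE.
  by case/orP: (dele_cover c d v) => ->; rewrite ?orbT.
have h3 : forall x v, x \in X -> v \in psi @: X -> e x v = e (psi x) ((psi^-1)%g v).
  move=> x v xX vY; rewrite cross // esym cross; last exact: imset_f.
    have F1 : ((psi^-1)%g v == c) = (v == d) by rewrite -(inj_eq (@perm_inj _ psi)) permKV pc.
    have F2 : (psi x == d) = (x == c) by rewrite -pc (inj_eq perm_inj).
    by rewrite F1 F2 andbC.
  by move: vY => /imsetP [z zX ->]; rewrite permK.
have [sg Hsg [s1 s2]] := swap_auto Ha dj (erefl _) h2 h3.
have aX : a \in X by rewrite inE.
have bY : b \in psi @: X by rewrite -pab imset_f.
by exists sg => //; rewrite s1 // s2 // -pab permK.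
Qed.

End Tree.


Section ZF.
Variable T : finType.
Variable e : rel T.

Lemma zf_sub (S : {set T}) : S \subset zf_step e S. Proof. exact: subsetUl. Qed.

Lemma iter_mono (S : {set T}) m n : m <= n -> iter m (zf_step e) S \subset iter n (zf_step e) S.
Proof.
move/subnK <-; elim: (n - m) => [|k IH]; rewrite ?add0n // addSn iterS.
exact: subset_trans IH (zf_sub _).
Qed.

Section Chains.
Variable S : {set T}.
Variable n : nat.
Hypothesis Hn : iter n (zf_step e) S = setT.
Let F k := iter k (zf_step e) S.

Lemma exF v : exists k, v \in F k. Proof. by exists n; rewrite /F Hn inE. Qed.
Definition tm v := @ex_minn (fun k => v \in F k) (exF v).

Lemma tm_in v : v \in F (tm v).
Proof. by rewrite /tm; case: ex_minnP. Qed.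
Lemma tm_min v k : v \in F k -> tm v <= k.
Proof. by rewrite /tm; case: ex_minnP => m _ H /H. Qed.
Lemma tm_le_n v : tm v <= n.
Proof. by apply: tm_min; rewrite /F Hn inE. Qed.
Lemma inF_mono v j k : j <= k -> v \in F j -> v \in F k.
Proof. by move=> jk; apply: (subsetP (iter_mono S jk)). Qed.

Lemma tm0 v : (v \in S) = (tm v == 0).
Proof.
apply/idP/idP => [vS|/eqP t0].
  by rewrite -leqn0; apply: tm_min.
by have := tm_in v; rewrite t0.
Qed.

Definition spec v u := [&& u \in F (tm v).-1, e u v &
  [forall w, (e u w && (w \notin F (tm v).-1)) ==> (w == v)]].
Definition fc v := odflt v [pick u | spec v u].

Lemma fc_spec v : v \notin S -> spec v (fc v).
Proof.
move=> vS; have tpos : 0 < tm v by rewrite lt0n -tm0.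
have ex : exists u, spec v u.
  have := tm_in v; rewrite -(prednK tpos) /F iterS -/(F _).
  rewrite /zf_step in_setU => /orP [vF|].
    by have := tm_min vF; rewrite -ltnS prednK // ltnn.
  rewrite inE => /existsP [u /and3P [uF euv /andP [_ H]]].
  by exists u; rewrite /spec uF euv H.
rewrite /fc; case: pickP => [u //|H]; case: ex => u; by rewrite H.
Qed.

Lemma fc_lt v : v \notin S -> tm (fc v) < tm v.
Proof.
move=> vS; have tpos : 0 < tm v by rewrite lt0n -tm0.
case/and3P: (fc_spec vS) => H _ _; have := tm_min H.
by rewrite -ltnS prednK.
Qed.

Lemma fc_e v : v \notin S -> e (fc v) v.
Proof. by move=> vS; case/and3P: (fc_spec vS). Qed.

Lemma fc_inj v v' : v \notin S -> v' \notin S -> fc v = fc v' -> v = v'.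
Proof.
wlog le : v v' / tm v <= tm v'.
  move=> W vS v'S E; case/orP: (leq_total (tm v) (tm v')) => H; first exact: W.
  by apply/esym; apply: W.
move=> vS v'S E; case/and3P: (fc_spec vS) => _ _ /forallP /(_ v') /implyP H.
apply/esym/eqP; apply: H; rewrite E (fc_e v'S) /=.
case/and3P: (fc_spec v'S) => _ _ _.
apply/negP => /(inF_mono (k := (tm v').-1)) H.
have : v' \in F (tm v').-1 by apply: H; rewrite -!subn1 leq_sub2r.
move/tm_min; have tpos : 0 < tm v' by rewrite lt0n -tm0.
by rewrite -ltnS prednK // ltnn.
Qed.

Definition nx u := [pick v | (v \notin S) && (fc v == u)].

Lemma nx_some u v : nx u = Some v -> v \notin S /\ fc v = u.
Proof. by rewrite /nx; case: pickP => // v' /andP [H /eqP H'] [<-]. Qed.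

Lemma nx_fc v : v \notin S -> nx (fc v) = Some v.
Proof.
move=> vS; rewrite /nx; case: pickP => [v' /andP [H /eqP H']|H].
  by rewrite (fc_inj H vS H').
by move: (H v); rewrite vS eqxx.
Qed.

Fixpoint ch (k : nat) (u : T) : seq T :=
  if k is k'.+1 then (if nx u is Some v then v :: ch k' v else [::]) else [::].

Lemma ch_tm k u v : v \in ch k u -> tm u < tm v.
Proof.
elim: k u => //= k IH u; case E: (nx u) => [v'|] //.
have [v'S fv'] := nx_some E.
have lt1 : tm u < tm v' by rewrite -fv' fc_lt.
rewrite inE => /orP [/eqP ->//|/IH]; exact: ltn_trans.
Qed.

Lemma ch_path k u : path e u (ch k u).
Proof.
elim: k u => //= k IH u; case E: (nx u) => [v'|] //=.
have [v'S fv'] := nx_some E; by rewrite -{1}fv' fc_e // IH.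
Qed.

Lemma ch_uniq k u : uniq (u :: ch k u).
Proof.
elim: k u => [//|k IH] u; rewrite cons_uniq; apply/andP; split.
  by apply/negP => /ch_tm; rewrite ltnn.
rewrite /=; case: (nx u) => [v'|] //; exact: IH.
Qed.

Lemma ch_notS k u v : v \in ch k u -> v \notin S.
Proof.
elim: k u => //= k IH u; case E: (nx u) => [v'|] //.
have [v'S fv'] := nx_some E; rewrite inE => /orP [/eqP ->//|]; exact: IH.
Qed.

Lemma ch_fc k u v : v \in ch k u -> fc v = u \/ fc v \in ch k u.
Proof.
elim: k u => //= k IH u; case E: (nx u) => [v'|] //.
have [v'S fv'] := nx_some E; rewrite inE => /orP [/eqP ->|/IH [->|H]]; first by left.
  by right; rewrite inE eqxx.
by right; rewrite inE H orbT.
Qed.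

Lemma ch_next k u a v : a \in u :: ch k u -> nx a = Some v -> v \in ch k.+1 u.
Proof.
elim: k u => [|k IH] u.
  by rewrite /= inE => /eqP -> /= ->; rewrite inE.
rewrite inE => /orP [/eqP -> E|]; first by rewrite /= E inE eqxx.
rewrite [ch k.+1 u]/=; case E: (nx u) => [v'|] // H1 H2.
by rewrite [ch k.+2 u]/= E inE (IH v' H1 H2) orbT.
Qed.

Lemma ch_mono k k' u : k <= k' -> {subset ch k u <= ch k' u}.
Proof.
elim: k k' u => // k IH [|k'] u //= le; case: (nx u) => [v'|] // z.
by rewrite !inE => /orP [->//|/(IH _ _ le) ->]; rewrite orbT.
Qed.

Lemma cover_ch_aux m v : tm v <= m -> exists2 s, s \in S & v \in s :: ch (tm v) s.
Proof.
elim: m v => [|m IH] v.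
  rewrite leqn0 => /eqP t0; exists v; first by rewrite tm0 t0.
  by rewrite mem_head.
move=> le; case: (boolP (v \in S)) => vS.
  by exists v => //; rewrite mem_head.
have lt := fc_lt vS.
have le' : tm (fc v) <= m by rewrite -ltnS (leq_trans lt le).
have [s sS H] := IH (fc v) le'.
exists s => //; rewrite inE; apply/orP; right.
apply: (ch_mono lt); exact: ch_next H (nx_fc vS).
Qed.

Lemma cover_ch v : exists2 s, s \in S & v \in s :: ch n s.
Proof.
have [s sS H] := cover_ch_aux (leqnn (tm v)); exists s => //.
move: H; rewrite !inE => /orP [->//|H]; by rewrite (ch_mono (tm_le_n v) H) orbT.
Qed.

Lemma root_uniq_aux m v s s' : tm v <= m -> s \in S -> s' \in S ->
  v \in s :: ch n s -> v \in s' :: ch n s' -> s = s'.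
Proof.
elim: m v => [|m IH] v le sS s'S.
  have vS : v \in S by rewrite tm0 -leqn0.
  rewrite !inE => /orP [/eqP <-|/ch_notS]; last by rewrite vS.
  by move/orP => [/eqP//|/ch_notS]; rewrite vS.
case: (boolP (v \in S)) => vS.
  rewrite !inE => /orP [/eqP <-|/ch_notS]; last by rewrite vS.
  by move/orP => [/eqP//|/ch_notS]; rewrite vS.
rewrite !inE => /orP [/eqP vs|H1]; first by rewrite -vs (negbTE vS) in sS.
move/orP => [/eqP vs|H2]; first by rewrite -vs (negbTE vS) in s'S.
have lt := fc_lt vS.
apply: (IH (fc v)) => //; first by rewrite -ltnS (leq_trans lt le).
  by case: (ch_fc H1) => [->|H]; rewrite inE ?eqxx // H orbT.
by case: (ch_fc H2) => [->|H]; rewrite inE ?eqxx // H orbT.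
Qed.

End Chains.

Lemma uniq_flatten_map (A B : eqType) (g : A -> seq B) r : uniq r ->
  (forall x, x \in r -> uniq (g x)) ->
  (forall x y z, x \in r -> y \in r -> z \in g x -> z \in g y -> x = y) ->
  uniq (flatten (map g r)).
Proof.
elim: r => //= x r IH /andP [xr ur] Hu Hd.
rewrite cat_uniq Hu ?mem_head //= IH //; last first.
- by move=> a b z ar br; apply: Hd; rewrite inE ?ar ?br orbT.
- by move=> a ar; apply: Hu; rewrite inE ar orbT.
rewrite andbT; apply/hasPn => z /flatten_mapP [y yr zy]; apply/negP => zx.
have xy : x = y by apply: (Hd x y z) => //; rewrite inE ?eqxx ?yr ?orbT.
by rewrite xy yr in xr.
Qed.

Lemma zf_cover (S : {set T}) : zero_forcing e S ->
  exists Q, path_cover e Q /\ size Q = #|S|.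
Proof.
case=> n Hn.
exists [seq s :: ch Hn n s | s <- enum S]; split; last by rewrite size_map cardE.
split; [|split].
- move=> q /mapP [s _ ->]; by rewrite /graph_path ch_uniq ch_path.
- apply: uniq_flatten_map; first exact: enum_uniq.
    by move=> x _; apply: ch_uniq.
  move=> x y z; rewrite !mem_enum => xS yS H1 H2.
  exact: (root_uniq_aux (leqnn _) xS yS H1 H2).
- move=> v; have [s sS H] := cover_ch Hn v.
  by apply/flatten_mapP; exists s => //; rewrite mem_enum.
Qed.

End ZF.


Lemma stable_exists (T : finType) (g : {set T} -> {set T}) (S : {set T}) :
  (forall A : {set T}, A \subset g A) -> exists k, g (iter k g S) = iter k g S.
Proof.
move=> sub.
case: (boolP [exists k : 'I_(#|T|.+2), g (iter k g S) == iter k g S]) =>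
  [/existsP [k /eqP H]|H]; first by exists k.
exfalso.
have nf : forall k, k < #|T|.+2 -> g (iter k g S) != iter k g S.
  move=> k lk; apply/negP => /eqP E; move/negP: H; apply; apply/existsP.
  by exists (Ordinal lk); rewrite /= E.
have cardk : forall k, k < #|T|.+2 -> k <= #|iter k g S|.
  elim=> // k IH lk; rewrite iterS.
  have pr : iter k g S \proper g (iter k g S).
    by rewrite properEneq eq_sym nf ?sub // ltnW.
  exact: leq_ltn_trans (IH (ltnW lk)) (proper_card pr).
have := cardk #|T|.+1 (ltnSn _); have := max_card (iter #|T|.+1 g S).
by move=> H1 H2; have := leq_trans H2 H1; rewrite ltnn.
Qed.

Section Heads.
Variable T : finType.
Variable e : rel T.
Hypothesis esym : symmetric e.
Hypothesis eirr : irreflexive e.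
Hypothesis eacyc : acyclic_graph e.
Variable P : seq (seq T).
Hypothesis HP : path_cover e P.
Variable x0 : T.

Definition heads := [set v | v \in map (head x0) P].

Lemma disj p q v : p \in P -> q \in P -> v \in p -> v \in q -> p = q.
Proof.
case: HP => _ [uP _]; elim: P uP => //= p0 P' IH.
rewrite cat_uniq => /and3P [_ H u'].
have nh : v \in flatten P' -> v \in p0 -> False.
  by move=> vf vp0; move/negP: H; apply; apply/hasP; exists v.
rewrite !inE => /orP [/eqP ->|pP] /orP [/eqP ->|qP] // vp vq.
- by exfalso; apply: nh vp; apply/flattenP; exists q.
- by exfalso; apply: nh vq; apply/flattenP; exists p.
exact: IH.
Qed.

Lemma gpP p : p \in P -> graph_path e p.
Proof. by case: HP => H _; apply: H. Qed.

Lemma gp_uniq p : p \in P -> uniq p.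
Proof. by move/gpP; case: p => // h t /andP []. Qed.

Lemma gp_edge p k : p \in P -> k.+1 < size p -> e (nth x0 p k) (nth x0 p k.+1).
Proof.
move/gpP; case: p => //= h t /andP [_ /(pathP x0) H] lt.
by apply: H.
Qed.

Definition pth v := nth [::] P (find (fun p => v \in p) P).

Lemma pth_in v : pth v \in P /\ v \in pth v.
Proof.
case: HP => _ [_ cov]; have /flattenP [p pP vp] := cov v.
have hs : has (fun p => v \in p) P by apply/hasP; exists p.
split; first by rewrite /pth; apply: mem_nth; rewrite -has_find.
exact: (nth_find [::] hs).
Qed.

Lemma pth_eq p v : p \in P -> v \in p -> pth v = p.
Proof. by move=> pP vp; have [H1 H2] := pth_in v; apply: disj H2 vp. Qed.

Section Stalled.
Variable F : {set T}.
Hypothesis stab : zf_step e F = F.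
Hypothesis SF : heads \subset F.

Lemma stable u v : u \in F -> v \notin F -> e u v ->
  exists w, [&& w \notin F, e u w & w != v].
Proof.
move=> uF vF euv.
case: (boolP [forall w, (e u w && (w \notin F)) ==> (w == v)]) => H.
  exfalso; move/negP: (vF); apply; rewrite -stab /zf_step in_setU inE.
  by apply/orP; right; apply/existsP; exists u; rewrite uF euv vF H.
move/forallPn: H => [w]; rewrite negb_imply => /andP [/andP [euw wF] wv].
by exists w; rewrite wF euw wv.
Qed.

Definition fw p := find (fun z => z \notin F) p.

Lemma fw_pos p : p \in P -> 0 < fw p.
Proof.
move=> pP; have := gpP pP; case: p pP => //= h t pP _.
have hF : h \in F by apply: (subsetP SF); rewrite inE; apply/mapP; exists (h :: t).
by rewrite hF.
Qed.

Lemma fw_before p k : k < fw p -> nth x0 p k \in F.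
Proof. by move/(before_find x0); move/negbT; rewrite negbK. Qed.

Lemma fw_at p : fw p < size p -> nth x0 p (fw p) \notin F.
Proof. by rewrite -has_find => H; apply: (nth_find x0 H). Qed.

Lemma fw_after p z : z \in p -> z \notin F -> fw p <= index z p.
Proof.
move=> zp zF; rewrite leqNgt; apply/negP => /fw_before.
by rewrite nth_index // (negbTE zF).
Qed.

Definition U := [pred v | fw (pth v) < size (pth v)].

Definition zp p := odflt x0 [pick z | [&& z \notin F, e (nth x0 p (fw p).-1) z &
   z != nth x0 p (fw p)]].

Lemma zp_spec p : p \in P -> fw p < size p ->
  [&& zp p \notin F, e (nth x0 p (fw p).-1) (zp p) & zp p != nth x0 p (fw p)].
Proof.
move=> pP lt; have pos := fw_pos pP.
have uF : nth x0 p (fw p).-1 \in F by apply: fw_before; rewrite prednK.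
have euv : e (nth x0 p (fw p).-1) (nth x0 p (fw p)).
  by have := gp_edge pP (k := (fw p).-1); rewrite prednK //; apply.
have [w Hw] := stable uF (fw_at lt) euv.
rewrite /zp; case: pickP => [z //|H]; by rewrite H in Hw.
Qed.

Definition f v := let p := pth v in let j := index v p in
  if j.+1 < fw p then nth x0 p j.+1 else if j.+1 == fw p then zp p else nth x0 p j.-1.

Lemma f_at p k : p \in P -> k < size p -> f (nth x0 p k) =
  if k.+1 < fw p then nth x0 p k.+1 else if k.+1 == fw p then zp p else nth x0 p k.-1.
Proof.
move=> pP lt; rewrite /f (pth_eq pP (mem_nth x0 lt)) index_uniq //; exact: gp_uniq.
Qed.

Lemma U_nth p k : p \in P -> fw p < size p -> k < size p -> nth x0 p k \in U.
Proof. by move=> pP lt kl; rewrite inE (pth_eq pP (mem_nth x0 kl)). Qed.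

Lemma U_white z : z \notin F -> z \in U.
Proof.
move=> zF; have [H1 H2] := pth_in z; rewrite inE.
apply: leq_ltn_trans (fw_after H2 zF) _; by rewrite index_mem.
Qed.

Lemma main3 p k : p \in P -> fw p < size p -> k < size p ->
  [/\ f (nth x0 p k) \in U, e (nth x0 p k) (f (nth x0 p k)) &
      f (f (nth x0 p k)) != nth x0 p k].
Proof.
move=> pP lt kl; have pos := fw_pos pP; have up := gp_uniq pP.
have /and3P [zF ewz zn] := zp_spec pP lt.
rewrite f_at //.
case: (ltnP k.+1 (fw p)) => [lt1|ge1].
  have k1s : k.+1 < size p by apply: ltn_trans lt.
  split; first exact: U_nth.
    exact: gp_edge.
  rewrite f_at //; case: (ltnP k.+2 (fw p)) => [lt2|ge2].
    by rewrite nth_uniq //; [lia | apply: leq_ltn_trans lt].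
  have -> : k.+2 == (fw p) by rewrite eqn_leq ge2 lt1.
  by apply: contraNneq zF => ->; apply: fw_before; lia.
case: (eqVneq k.+1 (fw p)) => [ki|kni].
  have kE : k = (fw p).-1 by rewrite -ki.
  split; first exact: U_white.
    by rewrite kE.
  have [qP zq] := pth_in (zp p).
  have mq : (index (zp p) (pth (zp p))) < size (pth (zp p)) by rewrite index_mem.
  have fm : fw (pth (zp p)) <= (index (zp p) (pth (zp p))) by apply: fw_after.
  have qpos := fw_pos qP.
  rewrite -{1}(nth_index x0 zq) f_at //.
  have -> : ((index (zp p) (pth (zp p))).+1 < fw (pth (zp p))) = false by apply/negbTE; rewrite -leqNgt; lia.
  have -> : ((index (zp p) (pth (zp p))).+1 == fw (pth (zp p))) = false by apply/negbTE; lia.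
  apply/eqP => E.
  have vq : nth x0 p k \in (pth (zp p)) by rewrite -E mem_nth //; exact: leq_ltn_trans (leq_pred _) mq.
  have pq : p = (pth (zp p)) by apply: (disj pP qP (mem_nth x0 kl) vq).
  move: E mq fm zq; rewrite -pq => E mq fm zq.
  move/eqP: E; rewrite nth_uniq //; last exact: leq_ltn_trans (leq_pred _) mq.
  move/eqP => mk.
  have iE : index (zp p) p = fw p by lia.
  by move: zn; rewrite -iE nth_index // eqxx.
have ki : (fw p) < k.+1 by rewrite ltn_neqAle eq_sym kni ge1.
have kpos : 0 < k by lia.
split.
- by apply: U_nth => //; lia.
- by rewrite esym; have := gp_edge pP (k := k.-1); rewrite prednK //; apply.
rewrite f_at //; last by lia.
rewrite prednK //.
have -> : (k < (fw p)) = false by apply/negbTE; lia.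
case: (eqVneq k (fw p)) => [kk|kni2]; first by rewrite kk.
by rewrite nth_uniq //; lia.
Qed.

Lemma stalled_full : F = setT.
Proof.
have M : forall v, v \in U -> [/\ f v \in U, e v (f v) & f (f v) != v].
  move=> v vU; have [pP vp] := pth_in v.
  have kl : index v (pth v) < size (pth v) by rewrite index_mem.
  by have := main3 pP vU kl; rewrite nth_index.
apply/setP => v0; rewrite inE; apply/negPn/negP => v0F.
apply: (noback eirr eacyc (U := U) (f := f) (x := v0)).
- exact: U_white.
- by move=> v /M [].
- by move=> v /M [].
- by move=> v /M [].
Qed.

End Stalled.

Lemma heads_zf : zero_forcing e heads.
Proof.
have [k Hk] := stable_exists heads (@zf_sub T e).
exists k; apply: (@stalled_full (iter k (zf_step e) heads)) => //.
exact: (@iter_mono T e heads 0 k (leq0n k)).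
Qed.

Lemma heads_card : #|heads| <= size P.
Proof.
rewrite (eq_card (_ : heads =i [seq head x0 p | p <- P])); last by move=> v; rewrite inE.
by rewrite -(size_map (head x0)); apply: card_size.
Qed.

End Heads.


Lemma perm_flatten_map (A : eqType) (g : seq A -> seq A) (L : seq (seq A)) :
  (forall q, perm_eq (g q) q) -> perm_eq (flatten (map g L)) (flatten L).
Proof. move=> H; elim: L => //= q L IH; exact: perm_cat (H q) IH. Qed.

Lemma rev_cons_last (A : Type) (h : A) t : rev (h :: t) = last h t :: rev (belast h t).
Proof. by rewrite lastI rev_rcons. Qed.

Lemma gp_rev (T : finType) (e : rel T) : symmetric e ->
  forall s, graph_path e s -> graph_path e (rev s).
Proof.
move=> esym [|h t] //; rewrite {1}/graph_path => /andP [u pt].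
rewrite rev_cons_last /graph_path -rev_cons_last rev_uniq u /= rev_path.
by rewrite (@eq_path _ _ e) // => a b; rewrite esym.
Qed.

Lemma head_rev (A : Type) (x0 : A) s : head x0 (rev s) = last x0 s.
Proof. by case: s => // h t; rewrite rev_cons_last. Qed.

Lemma iso_auto (T : finType) (e : rel T) (sg : {perm T}) (r : rel T) y :
  automorphism e sg -> (forall a b, r (sg a) (sg b) = r a b) ->
  iso_induced e (component r y) (component r (sg y)).
Proof.
move=> Ha Hr; exists sg; split.
- by move=> a b _ _; apply: perm_inj.
- exact: comp_image.
- by move=> a b _ _; apply: Ha.
Qed.

Lemma auto_exp (T : finType) (e : rel T) (phi : {perm T}) k :
  automorphism e phi -> automorphism e (phi ^+ k)%g.
Proof.
move=> Ha; elim: k => [|k IH] x y; first by rewrite expg0 !perm1.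
by rewrite expgS !permM IH Ha.
Qed.

Lemma min_heads (T : finType) (e : rel T) (P : seq (seq T)) (x0 : T) :
  symmetric e -> irreflexive e -> acyclic_graph e -> path_cover e P ->
  (forall Q, path_cover e Q -> size P <= size Q) -> min_zero_forcing e (heads P x0).
Proof.
move=> esym eirr eacyc HP Pmin; split; first exact: heads_zf.
move=> S' /zf_cover [Q [HQ sQ]]; rewrite -sQ.
exact: leq_trans (heads_card P x0) (Pmin Q HQ).
Qed.

Unset Implicit Arguments. Set Strict Implicit. Set Printing Implicit Defensive.

Theorem lemma3p9 (T : finType) (e : rel T) (P : seq (seq T)) (s : seq T) (x0 : T) :
  is_tree e -> iso_unique_zf e -> min_path_cover e P -> s \in P ->
  let l := size s in
  let x := fun i => nth x0 s i.-1 in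
  let p := if odd l then l.+1./2 else l./2 in
  (odd l -> 3 <= l ->
     iso_induced e (component (del_vertex e (x p)) (x p.-1))
                   (component (del_vertex e (x p)) (x p.+1))) /\
  (~~ odd l ->
     iso_induced e (component (del_edge e (x p) (x p.+1)) (x p))
                   (component (del_edge e (x p) (x p.+1)) (x p.+1))) /\
  (exists2 phi : {perm T}, automorphism e phi & phi (x 1) = x l /\ phi (x l) = x 1).
Proof.
move=> [[esym eirr] econn eacyc] iso [HP Pmin] sP l x p.
have gs : graph_path e s by case: HP => H _; apply: H.
set a := head x0 s; set b := last x0 s.
have [sg Hsg [sa sb]] : exists2 sg : {perm T}, automorphism e sg & sg a = b /\ sg b = a.
  case: (eqVneq a b) => [<-|nab]; first by exists 1%g => [u v|]; rewrite ?perm1.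
  pose g q := if q == s then rev s else q.
  pose P' := map g P.
  have HP' : path_cover e P'.
    case: HP => H1 [H2 H3].
    have pf : perm_eq (flatten P') (flatten P).
      apply: perm_flatten_map => q; rewrite /g; case: eqP => [->|_] //.
      by rewrite perm_rev.
    split; [|split].
    - move=> q /mapP [q0 q0P ->]; rewrite /g; case: (q0 == s); last exact: H1.
      exact: gp_rev.
    - by rewrite (perm_uniq pf).
    - by move=> v; rewrite (perm_mem pf).
  have sP' : size P' = size P by rewrite size_map.
  have minA := min_heads x0 esym eirr eacyc HP Pmin.
  have minB : min_zero_forcing e (heads P' x0).
    apply: min_heads => // Q HQ; rewrite sP'; exact: Pmin.
  have [phi Hphi iAB] := iso _ _ minA minB.
  have aA : a \in heads P x0 by rewrite inE; apply/mapP; exists s.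
  have hq : forall q, q \in P -> q != s -> head x0 q \in q /\ head x0 q \in heads P x0.
    move=> q qP _; split; last by rewrite inE; apply/mapP; exists q.
    by case: HP => H _; move: (H q qP); case: q {qP} => // h t; rewrite mem_head.
  have BA : forall v, v \in heads P' x0 -> v != b -> v \in heads P x0.
    move=> v; rewrite inE => /mapP [q' /mapP [q qP ->] ->]; rewrite /g.
    case: (eqVneq q s) => [_|qs] /=; first by rewrite head_rev eqxx.
    by move=> _; case: (hq q qP qs).
  have aB : a \notin heads P' x0.
    apply/negP; rewrite inE => /mapP [q' /mapP [q qP ->]]; rewrite /g.
    case: (eqVneq q s) => [_|qs] /=.
      by rewrite head_rev => E; rewrite E eqxx in nab.
    move=> E; have [hqq _] := hq q qP qs.
    have aq : a \in q by rewrite E.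
    have as' : a \in s by move: gs; rewrite /a; case: (s) => // h t; rewrite mem_head.
    by move: qs; rewrite (disj HP qP sP aq as') eqxx.
  have step : forall k, 0 < k -> (forall i, 0 < i < k -> iter i phi a != b) ->
      iter k phi a \in heads P' x0.
    elim=> // k IH _ H.
    case: (posnP k) => [->|kpos]; first by rewrite /= -iAB imset_f.
    have Hk : iter k phi a \in heads P' x0.
      by apply: IH => // i /andP [i0 ik]; apply: H; rewrite i0 ltnS ltnW.
    rewrite iterS -iAB imset_f // BA // H //; by rewrite kpos ltnS leqnn.
  have N0 := order_gt0 phi.
  case: (boolP [exists i : 'I_#[phi]%g, (0 < i) && (iter i phi a == b)]) =>
    [/existsP [i /andP [ipos /eqP Hi]]|Hno].
    have Hpsi := auto_exp i Hphi.
    by apply: (swap_exists esym eirr eacyc econn Hpsi); rewrite permX.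
  exfalso; move/negP: aB; apply.
  have H : forall i, 0 < i < #[phi]%g -> iter i phi a != b.
    move=> i /andP [ipos ilt]; apply/negP => /eqP E; move/negP: Hno; apply.
    by apply/existsP; exists (Ordinal ilt); rewrite /= ipos E eqxx.
  by have := step _ N0 H; rewrite -permX expg_order perm1.
have [h [t E]] : exists h t, s = h :: t by case: (s) gs => // h t _; exists h, t.
have mr : map sg s = rev s.
  have ha : a = h by rewrite /a E.
  have hb : b = last h t by rewrite /b E.
  move: gs; rewrite E /graph_path => /andP [u pt].
  rewrite /= rev_cons_last; congr (_ :: _); first by rewrite -hb -sa ha.
  have E1 : last h t :: map sg t = map sg (h :: t) by rewrite /= -hb -sa ha.
  have E2 : last h t :: rev (belast h t) = rev (h :: t) by rewrite rev_cons_last.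
  apply: (path_unique esym eirr eacyc (a := last h t)).
  - by rewrite E1 map_inj_uniq //; exact: perm_inj.
  - have -> : last h t = sg h by rewrite -hb -sa ha.
    by apply: homo_path pt => y z; rewrite Hsg.
  - by rewrite E2 rev_uniq.
  - by rewrite rev_path (@eq_path _ _ e) // => y z; rewrite esym.
  - have -> : last (last h t) (map sg t) = sg (last h t).
      by rewrite {1}(_ : last h t = sg h) ?last_map // -hb -sa ha.
    have : last x0 (rev (h :: t)) = h by rewrite rev_cons last_rcons.
    by rewrite rev_cons_last /= => ->; rewrite -hb sb ha.
have rv : forall i, i < l -> sg (nth x0 s i) = nth x0 s (l - i.+1).
  by move=> i il; rewrite -(nth_map x0 x0 _ il) mr nth_rev.
have lpos : 0 < l by rewrite /l E.
have Hdv : forall w, sg w = w -> forall y z,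
    del_vertex e w (sg y) (sg z) = del_vertex e w y z.
  by move=> w sw y z; rewrite /del_vertex Hsg -{1 2}sw !(inj_eq perm_inj).
have Hde : forall u v, sg u = v -> sg v = u -> forall y z,
    del_edge e u v (sg y) (sg z) = del_edge e u v y z.
  move=> u v su sv.
  have E1 : forall z, (sg z == u) = (z == v) by move=> z; rewrite -{1}sv (inj_eq perm_inj).
  have E2 : forall z, (sg z == v) = (z == u) by move=> z; rewrite -{1}su (inj_eq perm_inj).
  by move=> y z; rewrite /del_edge Hsg !E1 !E2 orbC.
have hl := odd_double_half l; rewrite -addnn in hl.
split; [|split].
- move=> ol l3; rewrite /p ol.
  have pE : l.+1./2 = (l./2).+1 by rewrite -[l.+1./2]/(uphalf l) uphalf_half ol.
  rewrite pE; rewrite ol in hl.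
  have e1 : x (l./2).+1.+1 = sg (x (l./2).+1.-1).
    by rewrite /x rv /=; [congr nth; lia | lia].
  have e0 : sg (x (l./2).+1) = x (l./2).+1.
    by rewrite /x rv /=; [congr nth; lia | lia].
  rewrite e1; apply: iso_auto => //; exact: Hdv.
- move=> ol; rewrite /p (negbTE ol); rewrite (negbTE ol) in hl.
  have e1 : x (l./2).+1 = sg (x (l./2)).
    by rewrite /x rv /=; [congr nth; lia | lia].
  have e2 : sg (x (l./2).+1) = x (l./2).
    by rewrite /x rv /=; [congr nth; lia | lia].
  rewrite {3}e1; apply: iso_auto => //; apply: Hde => //; by rewrite -e1.
- exists sg => //; rewrite /x /l /= nth0 nth_last -/a -/b.
  by rewrite sa sb.
Qed.
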